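(* Let $G$ be a $2$-connected cubic multigraph. For every tombolo-cut $(U,\bar U)$ of $G$, the two edges of its cut-set share no endpoint.
   Context: Multigraphs are finite and loopless, parallel edges allowed. A cut of $G$ is a bipartition $(U,\bar U)$ of $V(G)$ with $\bar U=V(G)\setminus U$; its cut-set is the set of edges with one endpoint in $U$ and the other in $\bar U$. A tombolo-cut is a cut whose cut-set has exactly $2$ edges. *)

(* Defs.v *)
From mathcomp Require Import all_boot.
Set Implicit Arguments. Unset Strict Implicit. Unset Printing Implicit Defensive.

(* A finite multigraph with vertex type V and edge type E: every edge e has
   two endpoints [src e] and [tgt e]; parallel edges are allowed (distinct
   edges may have the same endpoints). *)
Section Multigraph.
Variables (V E : finType) (src tgt : E -> V).

Definition loopless : Prop := forall e : E, src e != tgt e.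

Definition incident (e : E) (v : V) : bool := (src e == v) || (tgt e == v).

Definition degree (v : V) : nat :=
  #|[set e | src e == v]| + #|[set e | tgt e == v]|.

Definition cubic : Prop := forall v : V, degree v = 3.

Definition adj_in (S : {set V}) : rel V :=
  fun x y => [&& x \in S, y \in S &
     [exists e : E, ((src e == x) && (tgt e == y)) || ((src e == y) && (tgt e == x))]].

Definition connected_on (S : {set V}) : Prop :=
  forall x y, x \in S -> y \in S -> connect (adj_in S) x y.

(* 2-connected (Diestel): more than 2 vertices, and G - X is connected for
   every vertex set X with |X| < 2 *)
Definition two_connected : Prop :=
  2 < #|V| /\ connected_on setT /\ forall v : V, connected_on [set~ v].

Definition cutset (U : {set V}) : {set E} :=
  [set e | (src e \in U) != (tgt e \in U)].

Definition tombolo_cut (U : {set V}) : Prop := #|cutset U| = 2.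

End Multigraph.

(* Main.v *)
Require Import Defs.
From mathcomp Require Import all_boot.

Lemma cross_path (T : finType) (r : rel T) (P : pred T) x p :
  path r x p -> P x != P (last x p) -> exists a b, r a b /\ P a != P b.
Proof.
elim: p x => [|y p IH] x /=; first by rewrite eqxx.
case/andP=> rxy pp Hd.
case: (boolP (P x == P y)) => [/eqP E|N]; last by exists x, y.
by apply: (IH y pp); rewrite -E.
Qed.

Theorem proposition10 (V E : finType) (src tgt : E -> V) :
  loopless src tgt ->
  cubic src tgt ->
  two_connected src tgt ->
  forall U : {set V}, tombolo_cut src tgt U ->
  forall e1 e2 : E, e1 \in cutset src tgt U -> e2 \in cutset src tgt U ->
  e1 != e2 ->
  forall v : V, ~~ (incident src tgt e1 v && incident src tgt e2 v).
Proof.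
move=> Hll Hcub [_ [_ H2c]] U Htc e1 e2 He1 He2 Hne v.
apply/negP=> /andP[I1 I2].
have Hcut : forall e, e \in cutset src tgt U -> (e == e1) || (e == e2).
  move=> e He.
  have Hs : [set e1; e2] \subset cutset src tgt U.
    by apply/subsetP=> z; rewrite in_set2 => /orP[]/eqP->.
  have Heq : [set e1; e2] = cutset src tgt U.
    apply/eqP; rewrite eqEcard Hs /=.
    by rewrite /tombolo_cut in Htc; rewrite Htc cards2 Hne.
  by move: He; rewrite -Heq !inE.
set I := [set e | incident src tgt e v].
have HI : #|I| = 3.
  have -> : I = [set e | src e == v] :|: [set e | tgt e == v].
    by apply/setP=> e; rewrite !inE.
  rewrite cardsU.
  have -> : [set e | src e == v] :&: [set e | tgt e == v] = set0.
    apply/setP=> e; rewrite !inE.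
    apply/negP=> /andP[/eqP a /eqP b].
    by move: (Hll e); rewrite a b eqxx.
  by rewrite cards0 subn0; apply: Hcub.
have : ~~ (I \subset [set e1; e2]).
  apply/negP=> Hs; move: (subset_leq_card Hs).
  by rewrite HI cards2 Hne.
case/subsetPn=> f; rewrite inE => If; rewrite !inE negb_or => /andP[Nf1 Nf2].
have fnc : f \notin cutset src tgt U.
  by apply/negP=> /Hcut; rewrite (negbTE Nf1) (negbTE Nf2).
(* other endpoint of f, x, and of e1, y *)
have [x [xv xside]] : exists x, x != v /\ (x \in U) = (v \in U).
  move: fnc If; rewrite /incident !inE negbK => /eqP Hs /orP[]/eqP Hv.
  - exists (tgt f); split; last by rewrite -Hs Hv.
    by rewrite -Hv eq_sym; apply: Hll.
  - exists (src f); split; last by rewrite Hs Hv.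
    by rewrite -Hv; apply: Hll.
have [y [yv yside]] : exists y, y != v /\ (y \in U) != (v \in U).
  move: He1 I1; rewrite /incident !inE => Hs /orP[]/eqP Hv.
  - exists (tgt e1); split; last by rewrite eq_sym -Hv.
    by rewrite -Hv eq_sym; apply: Hll.
  - exists (src e1); split; last by rewrite -Hv.
    by rewrite -Hv; apply: Hll.
have Hc := H2c v x y.
have : connect (adj_in src tgt [set~ v]) x y by apply: Hc; rewrite !inE.
case/connectP=> p pp Hl.
have [a [b [Hab Hd]]] : exists a b, adj_in src tgt [set~ v] a b /\
    (a \in U) != (b \in U).
  apply: (@cross_path _ _ (fun z => z \in U) _ _ pp).
  by rewrite -Hl xside eq_sym.
move: Hab; rewrite /adj_in !inE => /and3P[av bv /existsP[e He]].
have ec : e \in cutset src tgt U.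
  rewrite inE; move: He => /orP[]/andP[/eqP-> /eqP->] //.
  by rewrite eq_sym.
have Iev : incident src tgt e v.
  by case/orP: (Hcut e ec) => /eqP->.
move: Iev; rewrite /incident.
by move: He => /orP[]/andP[/eqP-> /eqP->]; rewrite (negbTE av) (negbTE bv).
Qed.
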